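(* Let $(\mathcal J_1,\mathcal J_2,\mathcal J_3)$ be a generalized almost hypercomplex structure and $D$ a generalized connection on a Courant algebroid $E$ with $D\mathcal J_1=0$. Define $D^{(1)}_u:=D_u-\frac12\mathcal J_2(D_u\mathcal J_2)$ and $\tilde D:=D^{(1)}-\frac16\tilde\pi(T^{D^{(1)}})$, where $\tilde\pi:\Lambda^3E^*\to E^*\otimes\Lambda^2E^*$ is $(\tilde\pi\alpha)(u,v,w)=\alpha(u,v,w)+\sum_{i=1}^3\alpha(u,\mathcal J_iv,\mathcal J_iw)$ and, for $\eta\in E^*\otimes\Lambda^2E^*$, $D^{(1)}+\eta$ means $\langle(D^{(1)}+\eta)_uv,w\rangle=\langle D^{(1)}_uv,w\rangle+\eta(u,v,w)$. Then $D^{(1)}$ and $\tilde D$ are generalized connections preserving each $\mathcal J_i$, $i=1,2,3$, and $$T^{\tilde D}(u,v,w)=\tfrac16\sum_{i=1}^3N_{\mathcal J_i}(u,v,w).$$ In particular, if $(\mathcal J_1,\mathcal J_2,\mathcal J_3)$ is a generalized hypercomplex structure, then $\tilde D$ is torsion-free (and hypercomplex).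
   Context: A Courant algebroid on $M$ is a real vector bundle $E\to M$ with nondegenerate symmetric bilinear form $\langle\cdot,\cdot\rangle$, an $\mathbb R$-bilinear bracket $[\cdot,\cdot]$ on $\Gamma(E)$ and bundle map $\pi:E\to TM$ such that for $u,v,w\in\Gamma(E)$, $f\in C^\infty(M)$: $[u,[v,w]]=[[u,v],w]+[v,[u,w]]$; $\pi([u,v])=[\pi(u),\pi(v)]$; $[u,fv]=\pi(u)(f)v+f[u,v]$; $\pi(u)\langle v,w\rangle=\langle[u,v],w\rangle+\langle v,[u,w]\rangle$; $2\langle[u,u],v\rangle=\pi(v)\langle u,u\rangle$. A generalized connection is an $\mathbb R$-linear $D:\Gamma(E)\to\Gamma(E^*\otimes E)$ with $D_u(fv)=\pi(u)(f)v+fD_uv$ and $\pi(u)\langle v,w\rangle=\langle D_uv,w\rangle+\langle v,D_uw\rangle$; its torsion $T^D(u,v)=D_uv-D_vu-[u,v]+(Du)^*v$ ($(Du)^*$ adjoint of $w\mapsto D_wu$) is viewed as the 3-form $T^D(u,v,w)=\langle T^D(u,v),w\rangle$. A generalized almost complex structure is a $\langle\cdot,\cdot\rangle$-orthogonal $\mathcal J$ with $\mathcal J^2=-\mathrm{Id}$; $N_{\mathcal J}(u,v)=[\mathcal Ju,\mathcal Jv]-[u,v]-\mathcal J([\mathcal Ju,v]+[u,\mathcal Jv])$, viewed as the 3-form $\langle N_{\mathcal J}(u,v),w\rangle$. A generalized almost hypercomplex structure is a triple of pairwise anticommuting generalized almost complex structures with $\mathcal J_3=\mathcal J_1\mathcal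 J_2$; it is a generalized hypercomplex structure if every $N_{\mathcal J_i}=0$. *)

(* Defs.v *)
(* Courant algebroids in algebraic form.
   C^oo(M) is modelled by a commutative R-algebra A (R : realType),
   Gamma(E) by an A-module E, vector fields by R-linear derivations of A. *)
From HB Require Import structures.
From mathcomp Require Import all_boot all_order all_algebra.
From mathcomp Require Import reals.
Set Implicit Arguments. Unset Strict Implicit. Unset Printing Implicit Defensive.
Import GRing.Theory.
Local Open Scope ring_scope.

Section Courant.
Variables (R : realType) (A : comAlgType R) (E : lmodType A).

Definition derivation (X : A -> A) : Prop :=
  (forall f g, X (f + g) = X f + X g) /\
  (forall (r : R) f, X (r *: f) = r *: X f) /\
  (forall f g, X (f * g) = X f * g + f * X g).

Definition Alinear_form (phi : E -> A) : Prop :=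
  (forall u v, phi (u + v) = phi u + phi v) /\
  (forall (f : A) u, phi (f *: u) = f * phi u).

Definition Alinear_endo (J : E -> E) : Prop :=
  (forall u v, J (u + v) = J u + J v) /\
  (forall (f : A) u, J (f *: u) = f *: J u).

Definition courant_algebroid (pair : E -> E -> A) (br : E -> E -> E)
    (rho : E -> A -> A) : Prop :=
  (forall u v, pair u v = pair v u) /\
  (forall u, Alinear_form (pair u)) /\
  (forall u, (forall w, pair u w = 0) -> u = 0) /\
  (forall phi, Alinear_form phi -> exists u, forall w, pair u w = phi w) /\
  (forall u, derivation (rho u)) /\
  (forall u v f, rho (u + v) f = rho u f + rho v f) /\
  (forall (g : A) u f, rho (g *: u) f = g * rho u f) /\
  (forall u v w, br (u + v) w = br u w + br v w) /\
  (forall u v w, br u (v + w) = br u v + br u w) /\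
  (forall (r : R) u v, br (r%:A *: u) v = r%:A *: br u v) /\
  (forall (r : R) u v, br u (r%:A *: v) = r%:A *: br u v) /\
  (forall u v w, br u (br v w) = br (br u v) w + br v (br u w)) /\
  (forall u v f, rho (br u v) f = rho u (rho v f) - rho v (rho u f)) /\
  (forall u v (f : A), br u (f *: v) = rho u f *: v + f *: br u v) /\
  (forall u v w, rho u (pair v w) = pair (br u v) w + pair v (br u w)) /\
  (forall u v, 2%:R * pair (br u u) v = rho v (pair u u)).

(* generalized connection: D u v = D_u v *)
Definition gen_connection (pair : E -> E -> A) (rho : E -> A -> A)
    (D : E -> E -> E) : Prop :=
  (forall u1 u2 v, D (u1 + u2) v = D u1 v + D u2 v) /\
  (forall (f : A) u v, D (f *: u) v = f *: D u v) /\
  (forall u v1 v2, D u (v1 + v2) = D u v1 + D u v2) /\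
  (forall (r : R) u v, D u (r%:A *: v) = r%:A *: D u v) /\
  (forall u v (f : A), D u (f *: v) = rho u f *: v + f *: D u v) /\
  (forall u v w, rho u (pair v w) = pair (D u v) w + pair v (D u w)).

(* torsion as a 3-form:
   T^D(u,v,w) = < D_u v - D_v u - [u,v] + (Du)^* v , w >,
   with < (Du)^* v, w > = < v, D_w u > *)
Definition torsion3 (pair : E -> E -> A) (br : E -> E -> E)
    (D : E -> E -> E) (u v w : E) : A :=
  pair (D u v - D v u - br u v) w + pair v (D w u).

Definition gen_almost_complex (pair : E -> E -> A) (J : E -> E) : Prop :=
  Alinear_endo J /\
  (forall u v, pair (J u) (J v) = pair u v) /\
  (forall u, J (J u) = - u).

Definition gen_almost_hypercomplex (pair : E -> E -> A) (J1 J2 J3 : E -> E) :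
    Prop :=
  gen_almost_complex pair J1 /\ gen_almost_complex pair J2 /\
  gen_almost_complex pair J3 /\
  (forall u, J1 (J2 u) = - J2 (J1 u)) /\
  (forall u, J1 (J3 u) = - J3 (J1 u)) /\
  (forall u, J2 (J3 u) = - J3 (J2 u)) /\
  (forall u, J3 u = J1 (J2 u)).

Definition nijenhuis3 (pair : E -> E -> A) (br : E -> E -> E) (J : E -> E)
    (u v w : E) : A :=
  pair (br (J u) (J v) - br u v - J (br (J u) v + br u (J v))) w.

Definition preserves (D : E -> E -> E) (J : E -> E) : Prop :=
  forall u v, D u (J v) = J (D u v).

Definition covJ (D : E -> E -> E) (J : E -> E) (u v : E) : E :=
  D u (J v) - J (D u v).

Definition Done (D : E -> E -> E) (J2 : E -> E) (u v : E) : E :=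
  D u v - (2^-1 : R)%:A *: J2 (covJ D J2 u v).

Definition pitilde (J1 J2 J3 : E -> E) (alpha : E -> E -> E -> A)
    (u v w : E) : A :=
  alpha u v w + (alpha u (J1 v) (J1 w) + alpha u (J2 v) (J2 w)
                 + alpha u (J3 v) (J3 w)).

End Courant.

(* Main.v *)
Require Import Defs.
From HB Require Import structures.
From mathcomp Require Import all_boot all_order all_algebra.
From mathcomp Require Import reals ring.
From Stdlib Require Import ClassicalEpsilon.
Import GRing.Theory Num.Theory.
Local Open Scope ring_scope.

Lemma zeq (V : zmodType) (l r : V) : l = r -> l - r = 0.
Proof. by move=> ->; rewrite subrr. Qed.
Arguments zeq {V l r}.
Ltac lin1 k1 H1 := match type of H1 with ?l1 = ?r1 =>
  apply: subr0_eq; 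
  transitivity (k1 * (l1 - r1)); [ring | by rewrite (zeq H1) mulr0] end.
Ltac lin2 k1 H1 k2 H2 := match type of H1 with ?l1 = ?r1 =>
  match type of H2 with ?l2 = ?r2 =>
  apply: subr0_eq;
  transitivity (k1 * (l1 - r1) + k2 * (l2 - r2)); [ring | by rewrite (zeq H1) (zeq H2) !mulr0 addr0] end end.
Ltac lin3 k1 H1 k2 H2 k3 H3 := match type of H1 with ?l1 = ?r1 =>
  match type of H2 with ?l2 = ?r2 => match type of H3 with ?l3 = ?r3 =>
  apply: subr0_eq;
  transitivity (k1 * (l1 - r1) + k2 * (l2 - r2) + k3 * (l3 - r3));
    [ring | by rewrite (zeq H1) (zeq H2) (zeq H3) !mulr0 !addr0] end end end.

Ltac alin1 H1 := match type of H1 with @eq ?T ?l1 ?r1 =>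
  first [lin1 (1:T) H1 | lin1 (-1:T) H1] end.
Ltac alin2 H1 H2 := match type of H1 with @eq ?T ?l1 ?r1 =>
  first [lin2 (1:T) H1 (1:T) H2 | lin2 (1:T) H1 (-1:T) H2 | lin2 (-1:T) H1 (1:T) H2 | lin2 (-1:T) H1 (-1:T) H2] end.
Ltac alin3 H1 H2 H3 := match type of H1 with @eq ?T ?l1 ?r1 =>
  first [lin3 (1:T) H1 (1:T) H2 (1:T) H3 | lin3 (1:T) H1 (-1:T) H2 (1:T) H3
        | lin3 (-1:T) H1 (1:T) H2 (1:T) H3 | lin3 (-1:T) H1 (-1:T) H2 (1:T) H3
        | lin3 (1:T) H1 (1:T) H2 (-1:T) H3 | lin3 (1:T) H1 (-1:T) H2 (-1:T) H3
        | lin3 (-1:T) H1 (1:T) H2 (-1:T) H3 | lin3 (-1:T) H1 (-1:T) H2 (-1:T) H3] end.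

Lemma add_neg (V W : zmodType) (f : V -> W) :
  (forall a b, f (a + b) = f a + f b) -> forall a, f (- a) = - f a.
Proof.
move=> fa a; have f0 : f 0 = 0 by apply: (addrI (f 0)); rewrite -fa !addr0.
by apply/eqP; rewrite -addr_eq0 -fa addNr f0.
Qed.

Lemma hn (R : realType) (A : comAlgType R) n : (0 < n)%N -> (n%:R^-1 : R)%:A * n%:R = 1 :> A.
Proof. move=> n0. rewrite -[n%:R : A]scaler_nat -scalerAl mul1r scalerA mulVf ?scale1r //.
 by rewrite pnatr_eq0 -lt0n. Qed.

Section Pf.
Variables (R : realType) (A : comAlgType R) (E : lmodType A)
    (pair : E -> E -> A) (br : E -> E -> E) (rho : E -> A -> A).
Hypothesis HC : courant_algebroid pair br rho.

Ltac dHC := case: HC => [c1 [c2 [c3 [c4 [c5 [c6 [c7 [c8 [c9 [c10 [c11 [c12 [c13 [c14 [c15 c16]]]]]]]]]]]]]]].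

Lemma pairC u v : pair u v = pair v u. Proof. by dHC. Qed.
Lemma pairDr u v w : pair u (v + w) = pair u v + pair u w.
Proof. by dHC; case: (c2 u). Qed.
Lemma pairZr u f v : pair u (f *: v) = f * pair u v.
Proof. by dHC; case: (c2 u). Qed.
Lemma pairNr u v : pair u (- v) = - pair u v.
Proof. by rewrite -scaleN1r pairZr mulN1r. Qed.
Lemma pairBr u v w : pair u (v - w) = pair u v - pair u w.
Proof. by rewrite pairDr pairNr. Qed.
Lemma pairDl u v w : pair (v + w) u = pair v u + pair w u.
Proof. by rewrite !(pairC _ u) pairDr. Qed.
Lemma pairZl u f v : pair (f *: v) u = f * pair v u.
Proof. by rewrite !(pairC _ u) pairZr. Qed.
Lemma pairNl u v : pair (- v) u = - pair v u.
Proof. by rewrite !(pairC _ u) pairNr. Qed.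
Lemma pairBl u v w : pair (v - w) u = pair v u - pair w u.
Proof. by rewrite pairDl pairNl. Qed.
Lemma pair_inj x y : (forall w, pair x w = pair y w) -> x = y.
Proof.
move=> H; apply: subr0_eq; dHC; apply: c3 => w.
by rewrite pairBl H subrr.
Qed.
Lemma rhoD u f g : rho u (f + g) = rho u f + rho u g.
Proof. by dHC; case: (c5 u). Qed.
Lemma brDl u v w : br (u + v) w = br u w + br v w. Proof. by dHC. Qed.
Lemma brDr u v w : br u (v + w) = br u v + br u w. Proof. by dHC. Qed.
Lemma br_inv u v w : rho u (pair v w) = pair (br u v) w + pair v (br u w).
Proof. by dHC. Qed.

Lemma cancel2 (x y : A) : 2%:R * x = 2%:R * y -> x = y.
Proof.
move=> H; have h := @hn R A 2 (isT : (0 < 2)%N).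
by rewrite -[x]mul1r -[y]mul1r -h -!mulrA H.
Qed.

Lemma br_sym u v w : pair (br u v) w + pair (br v u) w = rho w (pair u v).
Proof.
have Hu : 2%:R * pair (br u u) w = rho w (pair u u) by dHC.
have Hv : 2%:R * pair (br v v) w = rho w (pair v v) by dHC.
have H : 2%:R * pair (br (u+v) (u+v)) w = rho w (pair (u+v) (u+v)) by dHC.
move: H; rewrite !brDl !brDr !pairDl !pairDr !rhoD (pairC v u) => H.
apply: cancel2.
lin3 (1:A) H (-1:A) Hu (-1:A) Hv.
Qed.

Section Conn.
Variable Dc : E -> E -> E.
Hypothesis HD : gen_connection pair rho Dc.
Ltac dHD := case: HD => [d1 [d2 [d3 [d4 [d5 d6]]]]].
Lemma DcDl u1 u2 v : Dc (u1 + u2) v = Dc u1 v + Dc u2 v. Proof. by dHD. Qed.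
Lemma DcZl f u v : Dc (f *: u) v = f *: Dc u v. Proof. by dHD. Qed.
Lemma DcDr u v1 v2 : Dc u (v1 + v2) = Dc u v1 + Dc u v2. Proof. by dHD. Qed.
Lemma DcL u v f : Dc u (f *: v) = rho u f *: v + f *: Dc u v. Proof. by dHD. Qed.
Lemma DcM u v w : rho u (pair v w) = pair (Dc u v) w + pair v (Dc u w). Proof. by dHD. Qed.
Lemma DcNr u v : Dc u (- v) = - Dc u v. Proof. by apply: add_neg => a b; apply: DcDr. Qed.
Lemma DcNl u v : Dc (- u) v = - Dc u v. Proof. exact: (@add_neg _ _ (fun x => Dc x v) (fun a b => DcDl a b v) u). Qed.

Let T := torsion3 pair br Dc.

Lemma T_skew12 u v w : T u v w = - T v u w.
Proof.
rewrite /T /torsion3 !pairBl.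
have H1 := br_sym u v w.
have H2 := DcM w u v.
rewrite [pair (Dc w u) v]pairC in H2.
alin2 H1 H2.
Qed.

Lemma T_skew23 u v w : T u v w = - T u w v.
Proof.
rewrite /T /torsion3 !pairBl.
have H1 := br_inv u v w.
have H2 := DcM u v w.
rewrite [pair (Dc w u) v]pairC [pair (Dc v u) w]pairC.
rewrite [pair (Dc u w) v]pairC [pair (br u w) v]pairC.
alin2 H1 H2.
Qed.

Lemma T_cyc u v w : T u v w = T v w u.
Proof. by rewrite T_skew12 T_skew23 opprK. Qed.

Lemma T_Dr u v w1 w2 : T u v (w1 + w2) = T u v w1 + T u v w2.
Proof. rewrite /T /torsion3 pairDr DcDl pairDr; ring. Qed.
Lemma T_Zr u v f w : T u v (f *: w) = f * T u v w.
Proof. rewrite /T /torsion3 pairZr DcZl pairZr; ring. Qed.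
Lemma T_Dl u1 u2 v w : T (u1 + u2) v w = T u1 v w + T u2 v w.
Proof. by rewrite !(T_cyc _ v w) T_Dr. Qed.
Lemma T_Zl f u v w : T (f *: u) v w = f * T u v w.
Proof. by rewrite !(T_cyc _ v w) T_Zr. Qed.
Lemma T_Dm u v1 v2 w : T u (v1 + v2) w = T u v1 w + T u v2 w.
Proof. by rewrite !(T_cyc u _ w) !(T_cyc _ w u) T_Dr. Qed.
Lemma T_Zm u f v w : T u (f *: v) w = f * T u v w.
Proof. by rewrite !(T_cyc u _ w) !(T_cyc _ w u) T_Zr. Qed.
Lemma T_Nr u v w : T u v (- w) = - T u v w.
Proof. by rewrite -scaleN1r T_Zr mulN1r. Qed.
Lemma T_Nm u v w : T u (- v) w = - T u v w.
Proof. by rewrite -scaleN1r T_Zm mulN1r. Qed.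
Lemma T_Nl u v w : T (- u) v w = - T u v w.
Proof. by rewrite -scaleN1r T_Zl mulN1r. Qed.

Section Nij.
Variable J : E -> E.
Hypothesis HJ : gen_almost_complex pair J.
Hypothesis HP : preserves Dc J.
Lemma JD u v : J (u + v) = J u + J v. Proof. by case: HJ => [[]]. Qed.
Lemma JZ f u : J (f *: u) = f *: J u. Proof. by case: HJ => [[]]. Qed.
Lemma JJ u : J (J u) = - u. Proof. by case: HJ => _ []. Qed.
Lemma pairJJ u v : pair (J u) (J v) = pair u v. Proof. by case: HJ => _ []. Qed.
Lemma JN u : J (- u) = - J u. Proof. by rewrite -scaleN1r JZ scaleN1r. Qed.
Lemma pairJl u v : pair (J u) v = - pair u (J v).
Proof. by rewrite -pairJJ JJ pairNl. Qed.

Lemma nij u v w : nijenhuis3 pair br J u v w =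
  T u v w - T (J u) (J v) w - T (J u) v (J w) - T u (J v) (J w).
Proof.
have brT a b c : pair (br a b) c = pair (Dc a b) c - pair (Dc b a) c + pair b (Dc c a) - T a b c.
  by rewrite /T /torsion3 !pairBl; ring.
rewrite /nijenhuis3 !pairBl pairJl pairDl !brT !HP.
rewrite ?(pairJJ, pairJl, JJ, pairNr, pairNl, opprK).
ring.
Qed.
End Nij.
End Conn.

Section D1s.
Variables (J1 J2 J3 : E -> E) (D : E -> E -> E).
Hypothesis HH : gen_almost_hypercomplex pair J1 J2 J3.
Hypothesis HD : gen_connection pair rho D.
Hypothesis HP1 : preserves D J1.

Let h : A := (2^-1 : R)%:A.
Lemma hh : h * 2%:R = 1. Proof. exact: (@hn R A 2). Qed.
Lemma HJ1 : gen_almost_complex pair J1. Proof. by case: HH. Qed.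
Lemma HJ2 : gen_almost_complex pair J2. Proof. by case: HH => _ []. Qed.
Lemma HJ3 : gen_almost_complex pair J3. Proof. by case: HH => _ [_ []]. Qed.
Lemma J21 u : J2 (J1 u) = - J1 (J2 u).
Proof. by case: HH => _ [_ [_ [H _]]]; rewrite H opprK. Qed.
Lemma J3E u : J3 u = J1 (J2 u).
Proof. by case: HH => _ [_ [_ [_ [_ [_ H]]]]]. Qed.

Lemma D1p u v w : pair (Done D J2 u v) w = h * pair (D u v) w + h * pair (D u (J2 v)) (J2 w).
Proof.
rewrite /Done /covJ pairBl pairZl (pairJl _ HJ2) pairBl (pairJJ _ HJ2).
have := hh => H; lin1 (- pair (D u v) w) H.
Qed.

Lemma D1_conn : gen_connection pair rho (Done D J2).
Proof.
split; [|split; [|split; [|split; [|split]]]].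
- move=> u1 u2 v; apply: pair_inj => w.
  by rewrite pairDl !D1p !(DcDl _ HD) !pairDl; ring.
- move=> f u v; apply: pair_inj => w.
  by rewrite pairZl !D1p !(DcZl _ HD) !pairZl; ring.
- move=> u v1 v2; apply: pair_inj => w.
  by rewrite pairDl !D1p (JD _ HJ2) !(DcDr _ HD) !pairDl; ring.
- move=> r u v; apply: pair_inj => w.
  have Dr : D u (r%:A *: J2 v) = r%:A *: D u (J2 v) by case: HD => _ [_ [_ [H _]]].
  have Dr' : D u (r%:A *: v) = r%:A *: D u v by case: HD => _ [_ [_ [H _]]].
  by rewrite pairZl !D1p (JZ _ HJ2) Dr Dr' !pairZl; ring.
- move=> u v f; apply: pair_inj => w.
  rewrite D1p pairDl !pairZl D1p (JZ _ HJ2) !(DcL _ HD) !pairDl !pairZl (pairJJ _ HJ2).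
  have := hh => H; lin1 (rho u f * pair v w) H.
- move=> u v w.
  rewrite [pair v (Done _ _ u w)]pairC !D1p.
  have m1 := DcM _ HD u v w; have m2 := DcM _ HD u (J2 v) (J2 w).
  rewrite (pairJJ _ HJ2) in m2.
  rewrite [pair v (D u w)]pairC in m1; rewrite [pair (J2 v) _]pairC in m2.
  have := hh => H; lin3 (- rho u (pair v w)) H h m1 h m2.
Qed.

Lemma D1_P2 : preserves (Done D J2) J2.
Proof.
move=> u v; apply: pair_inj => w.
rewrite D1p (pairJl _ HJ2) D1p (JJ _ HJ2) (DcNr _ HD) (JJ _ HJ2) pairNl pairNr; ring.
Qed.

Lemma D1_P1 : preserves (Done D J2) J1.
Proof.
move=> u v; apply: pair_inj => w.
rewrite D1p (pairJl _ HJ1) D1p !J21 (DcNr _ HD) !HP1 ?pairNl ?pairNr !(pairJl _ HJ1) ?pairNr ?opprK; ring.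
Qed.

Lemma D1_P3 : preserves (Done D J2) J3.
Proof. by move=> u v; rewrite !J3E D1_P1 D1_P2. Qed.
End D1s.
Section Hyper.
Variables (J1 J2 J3 : E -> E) (Dc : E -> E -> E).
Hypothesis HH : gen_almost_hypercomplex pair J1 J2 J3.
Hypothesis HD : gen_connection pair rho Dc.
Hypothesis HP1 : preserves Dc J1.
Hypothesis HP2 : preserves Dc J2.
Hypothesis HP3 : preserves Dc J3.

Let T := torsion3 pair br Dc.
Let eta := pitilde J1 J2 J3 T.
Let c : A := (6^-1 : R)%:A.
Lemma hc : c * 6%:R = 1. Proof. exact: (@hn R A 6). Qed.

Let H1 : gen_almost_complex pair J1. Proof. by case: HH. Qed.
Let H2 : gen_almost_complex pair J2. Proof. by case: HH => _ []. Qed.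
Let H3 : gen_almost_complex pair J3. Proof. by case: HH => _ [_ []]. Qed.
Let J12 u : J1 (J2 u) = J3 u. Proof. by case: HH => _ [_ [_ [_ [_ [_ H]]]]]. Qed.
Let J21 u : J2 (J1 u) = - J3 u.
Proof. by case: HH => _ [_ [_ [H _]]]; rewrite -J12 H opprK. Qed.
Let J13 u : J1 (J3 u) = - J2 u.
Proof. by rewrite -J12 (JJ _ H1). Qed.
Let J31 u : J3 (J1 u) = J2 u.
Proof. by case: HH => _ [_ [_ [_ [H _]]]]; rewrite -[LHS]opprK -H J13 opprK. Qed.
Let J32 u : J3 (J2 u) = - J1 u.
Proof. by rewrite -J12 (JJ _ H2) (JN _ H1). Qed.
Let J23 u : J2 (J3 u) = J1 u.
Proof. by case: HH => _ [_ [_ [_ [_ [H _]]]]]; rewrite H J32 opprK. Qed.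

Ltac Jn := rewrite ?(JJ _ H1, JJ _ H2, JJ _ H3, J12, J21, J13, J31, J32, J23, JN _ H1, JN _ H2, JN _ H3).
Ltac Tn := rewrite /T ?(T_Nl _ HD, T_Nm _ HD, T_Nr _ HD).

Lemma eta_J1 u v w : eta u (J1 v) w = - eta u v (J1 w).
Proof. rewrite /eta /pitilde; Jn; Tn; ring. Qed.
Lemma eta_J2 u v w : eta u (J2 v) w = - eta u v (J2 w).
Proof. rewrite /eta /pitilde; Jn; Tn; ring. Qed.
Lemma eta_J3 u v w : eta u (J3 v) w = - eta u v (J3 w).
Proof. rewrite /eta /pitilde; Jn; Tn; ring. Qed.

Lemma eta_Dl u1 u2 v w : eta (u1 + u2) v w = eta u1 v w + eta u2 v w.
Proof. rewrite /eta /pitilde /T !(T_Dl _ HD); ring. Qed.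
Lemma eta_Zl f u v w : eta (f *: u) v w = f * eta u v w.
Proof. rewrite /eta /pitilde /T !(T_Zl _ HD); ring. Qed.
Lemma eta_Dm u v1 v2 w : eta u (v1 + v2) w = eta u v1 w + eta u v2 w.
Proof. rewrite /eta /pitilde /T (JD _ H1) (JD _ H2) (JD _ H3) !(T_Dm _ HD); ring. Qed.
Lemma eta_Zm u f v w : eta u (f *: v) w = f * eta u v w.
Proof. rewrite /eta /pitilde /T (JZ _ H1) (JZ _ H2) (JZ _ H3) !(T_Zm _ HD); ring. Qed.
Lemma eta_Dr u v w1 w2 : eta u v (w1 + w2) = eta u v w1 + eta u v w2.
Proof. rewrite /eta /pitilde /T (JD _ H1) (JD _ H2) (JD _ H3) !(T_Dr _ HD); ring. Qed.
Lemma eta_Zr u v f w : eta u v (f *: w) = f * eta u v w.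
Proof. rewrite /eta /pitilde /T (JZ _ H1) (JZ _ H2) (JZ _ H3) !(T_Zr _ HD); ring. Qed.
Lemma eta_skew u v w : eta u v w = - eta u w v.
Proof.
rewrite /eta /pitilde /T (T_skew23 _ HD u w v) (T_skew23 _ HD u (J1 w) (J1 v))
  (T_skew23 _ HD u (J2 w) (J2 v)) (T_skew23 _ HD u (J3 w) (J3 v)); ring.
Qed.

Lemma Alin_phi u v : Alinear_form (fun w => pair (Dc u v) w - c * eta u v w).
Proof.
split=> [w1 w2|f w]; first by rewrite pairDr eta_Dr; ring.
by rewrite pairZr eta_Zr; ring.
Qed.

Section Dts.
Variable Dt : E -> E -> E.
Hypothesis HDt : forall u v w, pair (Dt u v) w = pair (Dc u v) w - c * eta u v w.

Lemma Dt_conn : gen_connection pair rho Dt.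
Proof.
split; [|split; [|split; [|split; [|split]]]].
- move=> u1 u2 v; apply: pair_inj => w.
  by rewrite pairDl !HDt (DcDl _ HD) pairDl eta_Dl; ring.
- move=> f u v; apply: pair_inj => w.
  by rewrite pairZl !HDt (DcZl _ HD) pairZl eta_Zl; ring.
- move=> u v1 v2; apply: pair_inj => w.
  by rewrite pairDl !HDt (DcDr _ HD) pairDl eta_Dm; ring.
- move=> r u v; apply: pair_inj => w.
  have Dr' : Dc u (r%:A *: v) = r%:A *: Dc u v by case: HD => _ [_ [_ [H _]]].
  by rewrite pairZl !HDt Dr' pairZl eta_Zm; ring.
- move=> u v f; apply: pair_inj => w.
  by rewrite pairDl !pairZl !HDt (DcL _ HD) pairDl !pairZl eta_Zm; ring.
- move=> u v w.
  rewrite [pair v (Dt u w)]pairC !HDt.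
  have m1 := DcM _ HD u v w.
  rewrite [pair v (Dc u w)]pairC in m1.
  rewrite (eta_skew u w v). 
  alin1 m1.
Qed.

Lemma Dt_P1 : preserves Dt J1.
Proof.
move=> u v; apply: pair_inj => w.
by rewrite HDt HP1 !(pairJl _ H1) HDt eta_J1; ring.
Qed.
Lemma Dt_P2 : preserves Dt J2.
Proof.
move=> u v; apply: pair_inj => w.
by rewrite HDt HP2 !(pairJl _ H2) HDt eta_J2; ring.
Qed.
Lemma Dt_P3 : preserves Dt J3.
Proof.
move=> u v; apply: pair_inj => w.
by rewrite HDt HP3 !(pairJl _ H3) HDt eta_J3; ring.
Qed.

Lemma Dt_tors u v w : torsion3 pair br Dt u v w =
  c * (nijenhuis3 pair br J1 u v w + nijenhuis3 pair br J2 u v w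
       + nijenhuis3 pair br J3 u v w).
Proof.
have eT : T u v w = pair (Dc u v) w - pair (Dc v u) w - pair (br u v) w + pair (Dc w u) v.
  by rewrite /T /torsion3 !pairBl [pair v _]pairC.
rewrite /torsion3 !pairBl [pair v (Dt w u)]pairC !HDt.
rewrite (nij _ _ H1 HP1) (nij _ _ H2 HP2) (nij _ _ H3 HP3).
rewrite /eta /pitilde /T.
rewrite (T_skew12 _ HD v u w) (T_skew12 _ HD v (J1 u) (J1 w))
  (T_skew12 _ HD v (J2 u) (J2 w)) (T_skew12 _ HD v (J3 u) (J3 w)).
rewrite (T_cyc _ HD w u v) (T_cyc _ HD w (J1 u) (J1 v))
  (T_cyc _ HD w (J2 u) (J2 v)) (T_cyc _ HD w (J3 u) (J3 v)).
have hc' := hc.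
rewrite /T in eT. lin2 (-1 : A) eT (- torsion3 pair br Dc u v w) hc'.
Qed.
End Dts.
End Hyper.
End Pf.

Theorem proposition4p4 (R : realType) (A : comAlgType R) (E : lmodType A)
    (pair : E -> E -> A) (br : E -> E -> E) (rho : E -> A -> A)
    (J1 J2 J3 : E -> E) (D : E -> E -> E) :
  courant_algebroid pair br rho ->
  gen_almost_hypercomplex pair J1 J2 J3 ->
  gen_connection pair rho D ->
  preserves D J1 ->
  let D1 := Done D J2 in
  let eta := pitilde J1 J2 J3 (torsion3 pair br D1) in
  let is_Dtilde (Dt : E -> E -> E) :=
    forall u v w, pair (Dt u v) w = pair (D1 u v) w - (6^-1 : R)%:A * eta u v w in
  let N u v w := nijenhuis3 pair br J1 u v w + nijenhuis3 pair br J2 u v w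
                 + nijenhuis3 pair br J3 u v w in
  (gen_connection pair rho D1 /\
   preserves D1 J1 /\ preserves D1 J2 /\ preserves D1 J3) /\
  (exists Dt, is_Dtilde Dt) /\
  (forall Dt, is_Dtilde Dt ->
     gen_connection pair rho Dt /\
     preserves Dt J1 /\ preserves Dt J2 /\ preserves Dt J3 /\
     (forall u v w, torsion3 pair br Dt u v w = (6^-1 : R)%:A * N u v w) /\
     ((forall u v w, nijenhuis3 pair br J1 u v w = 0 /\
                     nijenhuis3 pair br J2 u v w = 0 /\
                     nijenhuis3 pair br J3 u v w = 0) ->
      forall u v w, torsion3 pair br Dt u v w = 0)).
Proof.
move=> HC HH HD HP1 D1 eta isD N.
have C1 : gen_connection pair rho D1  := D1_conn R A E pair br rho HC J1 J2 J3 D HH HD.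
have P1 : preserves D1 J1  := D1_P1 R A E pair br rho HC J1 J2 J3 D HH HD HP1.
have P2 : preserves D1 J2  := D1_P2 R A E pair br rho HC J1 J2 J3 D HH HD.
have P3 : preserves D1 J3  := D1_P3 R A E pair br rho HC J1 J2 J3 D HH HD HP1.
split; first by [].
split.
  have ex u v : exists x, forall w, pair x w = pair (D1 u v) w - (6^-1 : R)%:A * eta u v w.
    by case: (HC) => [_ [_ [_ [c4 _]]]]; apply: c4; exact: (Alin_phi R A E pair br rho HC J1 J2 J3 D1 HH C1).
  exists (fun u v => proj1_sig (constructive_indefinite_description _ (ex u v))).
  by move=> u v w; case: (constructive_indefinite_description _ (ex u v)).
move=> Dt HDt.
have T6 u v w : torsion3 pair br Dt u v w = (6^-1 : R)%:A * N u v w.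
  exact: (Dt_tors R A E pair br rho HC J1 J2 J3 D1 HH C1 P1 P2 P3 Dt HDt).
split; first exact: (Dt_conn R A E pair br rho HC J1 J2 J3 D1 HH C1 Dt HDt).
split; first exact: (Dt_P1 R A E pair br rho HC J1 J2 J3 D1 HH C1 P1 Dt HDt).
split; first exact: (Dt_P2 R A E pair br rho HC J1 J2 J3 D1 HH C1 P2 Dt HDt).
split; first exact: (Dt_P3 R A E pair br rho HC J1 J2 J3 D1 HH C1 P3 Dt HDt).
split; first exact: T6.
move=> HN u v w; rewrite T6 /N.
by case: (HN u v w) => [-> [-> ->]]; rewrite !addr0 mulr0.
Qed.
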